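(* Let $k\in\{1,2,4\}$, let $\mu:X\times Y\to Z$ be an isometric bilinear map of Euclidean spaces with $0<\dim X\le\dim Y=\dim Z=k$, let $\mathbb A$ be the normed division algebra of dimension $k$ ($\mathbb R$, $\mathbb C$ or $\mathbb H$), and let $W\subset\mathbb A$ be a real subspace with $\dim W=\dim X$. (a) There exist linear isometries $\varphi_X:X\to W$, $\varphi_Y:Y\to\mathbb A$, $\varphi_Z:Z\to\mathbb A$ with $\varphi_Z(\mu(x,y))=\varphi_X(x)\varphi_Y(y)$ for all $x\in X,y\in Y$. (b) If moreover $1\in W$, then for any unit vectors $e_X\in X$, $e_Y\in Y$ such isometries can be chosen with additionally $\varphi_X(e_X)=1$ and $\varphi_Y(e_Y)=1$.
   Context: A bilinear map $\mu:X\times Y\to Z$ of finite-dimensional real Euclidean spaces is isometric if $|\mu(x,y)|=|x|\,|y|$ for all $x,y$. $\mathbb R,\mathbb C,\mathbb H$ carry their standard Euclidean norms and multiplications. *)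

(* Defs.v *)
(* Euclidean spaces of dimension n are modelled as row
   vectors 'rV[R]_n with the standard inner product; linear maps as matrices
   acting on the right (x |-> x *m P). *)
From HB Require Import structures.
From mathcomp Require Import all_boot all_order all_algebra.
Set Implicit Arguments. Unset Strict Implicit. Unset Printing Implicit Defensive.
Import Order.TTheory GRing.Theory Num.Theory.
Local Open Scope ring_scope.

Definition vnorm (R : rcfType) (n : nat) (u : 'rV[R]_n) : R :=
  Num.sqrt (\sum_(i < n) u 0 i ^+ 2).

Definition bilinear_map (R : rcfType) (m n p : nat)
  (mu : 'rV[R]_m -> 'rV[R]_n -> 'rV[R]_p) : Prop :=
  (forall (a : R) x x' y, mu (a *: x + x') y = a *: mu x y + mu x' y) /\
  (forall (a : R) x y y', mu x (a *: y + y') = a *: mu x y + mu x y').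

Definition isometric_bilinear (R : rcfType) (m n p : nat)
  (mu : 'rV[R]_m -> 'rV[R]_n -> 'rV[R]_p) : Prop :=
  bilinear_map mu /\ forall x y, vnorm (mu x y) = vnorm x * vnorm y.

Definition lin_isometry (R : rcfType) (m n : nat) (P : 'M[R]_(m, n)) : Prop :=
  forall x : 'rV[R]_m, vnorm (x *m P) = vnorm x.

(* Quaternion multiplication table on the basis e0 = 1, e1 = i, e2 = j, e3 = k:
   qprod j l = (index, negative sign?) with e_j e_l = +- e_index. *)
Definition qprod (j l : nat) : nat * bool :=
  match j, l with
  | 0, l => (l, false)
  | j, 0 => (j, false)
  | 1, 1 | 2, 2 | 3, 3 => (0, true)
  | 1, 2 => (3, false) | 2, 1 => (3, true)
  | 2, 3 => (1, false) | 3, 2 => (1, true)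
  | 3, 1 => (2, false) | 1, 3 => (2, true)
  | _, _ => (0, false)
  end.

Definition qcoef (R : rcfType) (i j l : nat) : R :=
  let: (n, s) := qprod j l in
  if n == i then (if s then -1 else 1) else 0.

(* The normed division algebra A of dimension k in {1,2,4}, realised on R^k:
   the span of e0..e_(k-1) inside H, i.e. R (k=1), C = R + Ri (k=2), H (k=4),
   with their standard multiplication; the norm is vnorm. *)
Definition amul (R : rcfType) (k : nat) (a b : 'rV[R]_k) : 'rV[R]_k :=
  \row_(i < k) \sum_(j < k) \sum_(l < k) qcoef R i j l * a 0 j * b 0 l.

Definition aone (R : rcfType) (k : nat) : 'rV[R]_k :=
  \row_(i < k) (if (i : nat) == 0%N then 1 else 0).

(* Main.v *)
Require Import Defs.
From HB Require Import structures.
From mathcomp Require Import all_boot all_order all_algebra.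
From mathcomp Require Import ring lra zify.
Import Order.TTheory GRing.Theory Num.Theory.
Local Open Scope ring_scope.

Module Aux.
Set Implicit Arguments. Unset Strict Implicit. Unset Printing Implicit Defensive.

Section Dot.
Variable R : rcfType.

Definition dot n (u v : 'rV[R]_n) : R := (u *m v^T) 0 0.

Lemma dotE n (u v : 'rV[R]_n) : dot u v = \sum_i u 0 i * v 0 i.
Proof. by rewrite /dot mxE; apply: eq_bigr => i _; rewrite mxE. Qed.

Lemma dotC n (u v : 'rV[R]_n) : dot u v = dot v u.
Proof. by rewrite !dotE; apply: eq_bigr => i _; rewrite mulrC. Qed.

Lemma dotDl n (u v w : 'rV[R]_n) : dot (u + v) w = dot u w + dot v w.
Proof. by rewrite /dot mulmxDl mxE. Qed.
Lemma dotDr n (u v w : 'rV[R]_n) : dot w (u + v) = dot w u + dot w v.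
Proof. by rewrite /dot linearD /= mulmxDr mxE. Qed.
Lemma dotZl n a (u w : 'rV[R]_n) : dot (a *: u) w = a * dot u w.
Proof. by rewrite /dot -scalemxAl mxE. Qed.
Lemma dotZr n a (u w : 'rV[R]_n) : dot w (a *: u) = a * dot w u.
Proof. by rewrite /dot linearZ /= -scalemxAr mxE. Qed.
Lemma dotNl n (u w : 'rV[R]_n) : dot (- u) w = - dot u w.
Proof. by rewrite -scaleN1r dotZl mulN1r. Qed.
Lemma dotNr n (u w : 'rV[R]_n) : dot w (- u) = - dot w u.
Proof. by rewrite -scaleN1r dotZr mulN1r. Qed.
Lemma dot0l n (w : 'rV[R]_n) : dot 0 w = 0.
Proof. by rewrite /dot mul0mx mxE. Qed.
Lemma dot0r n (w : 'rV[R]_n) : dot w 0 = 0.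
Proof. by rewrite dotC dot0l. Qed.

Lemma dot_ge0 n (u : 'rV[R]_n) : 0 <= dot u u.
Proof. by rewrite dotE sumr_ge0 // => i _; rewrite -expr2 sqr_ge0. Qed.

Lemma dot_eq0 n (u : 'rV[R]_n) : dot u u = 0 -> u = 0.
Proof.
rewrite dotE => /eqP; rewrite psumr_eq0 => [/allP H|i _]; last by rewrite -expr2 sqr_ge0.
apply/rowP => i; rewrite mxE; have := H i (mem_index_enum i); move: (0 : 'I_1) => i0.
by rewrite /= -expr2 sqrf_eq0 (ord1 i0) => /eqP.
Qed.

Lemma vnormE n (u : 'rV[R]_n) : vnorm u = Num.sqrt (dot u u).
Proof. by rewrite /vnorm dotE; congr Num.sqrt; apply: eq_bigr => i _; rewrite expr2. Qed.

Lemma mulmx_dot m n (u v : 'rV[R]_m) (P : 'M[R]_(m, n)) :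
  dot (u *m P) (v *m P) = (u *m (P *m P^T) *m v^T) 0 0.
Proof. by rewrite /dot trmx_mul !mulmxA. Qed.

Lemma ortho_ext p q n (S : 'M[R]_(p, n)) (V : 'M[R]_(q, n)) :
  (\rank V < \rank S)%N ->
  exists u : 'rV[R]_n, [/\ (u <= S)%MS, u *m V^T = 0 & dot u u = 1].
Proof.
move=> hr.
have hK := mxrank_sum_cap S (kermx V^T).
rewrite mxrank_ker mxrank_tr in hK.
have hn := rank_leq_col (S + kermx V^T)%MS.
have hV := rank_leq_col V.
have : (\rank (S :&: kermx V^T)%MS != 0)%N by lia.
rewrite mxrank_eq0 => /rowV0Pn [v hv nz].
have hvS : (v <= S)%MS by apply: submx_trans hv (capmxSl _ _).
have hvK : v *m V^T = 0 by apply/sub_kermxP; apply: submx_trans hv (capmxSr _ _).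
have hd : 0 < dot v v.
  by rewrite lt_def dot_ge0 andbT; apply/eqP => /dot_eq0 h; rewrite h eqxx in nz.
set s := Num.sqrt (dot v v).
have hs : 0 < s by rewrite sqrtr_gt0.
exists (s^-1 *: v); split.
- by rewrite scalemx_sub.
- by rewrite -scalemxAl hvK scaler0.
- rewrite dotZl dotZr mulrA -[dot v v](@sqr_sqrtr _ (dot v v)) ?ltW // -/s.
  by field; rewrite gt_eqF.
Qed.

Lemma rank_orth p n (V : 'M[R]_(p, n)) : V *m V^T = 1%:M -> \rank V = p.
Proof.
move=> h; apply/eqP; rewrite eqn_leq rank_leq_row /=.
have := mxrankM_maxl V V^T; rewrite h mxrank1 //.
Qed.

Lemma dot1 n (u : 'rV[R]_n) : dot u u = 1 -> u *m u^T = 1%:M.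
Proof. by move=> h; apply/matrixP => i j; rewrite !ord1 -[LHS]/(dot u u) h mxE. Qed.

Lemma orth_col a b n (A : 'M[R]_(a, n)) (B : 'M[R]_(b, n)) :
  A *m A^T = 1%:M -> B *m B^T = 1%:M -> B *m A^T = 0 ->
  col_mx A B *m (col_mx A B)^T = 1%:M.
Proof.
move=> hA hB hBA; rewrite tr_col_mx mul_col_mx !mul_mx_row hA hB hBA.
by rewrite -[A *m B^T]trmxK trmx_mul trmxK hBA trmx0 -block_mxEv -scalar_mx_block.
Qed.

Lemma orth_complete s p n (S : 'M[R]_n) (V : 'M[R]_(p, n)) :
  V *m V^T = 1%:M -> (V <= S)%MS -> (p + s <= \rank S)%N ->
  exists G : 'M[R]_(s, n), [/\ G *m G^T = 1%:M, G *m V^T = 0 & (G <= S)%MS].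
Proof.
move=> hV hVS; elim: s => [|s IH] hs.
  by exists 0; split; [apply/matrixP => i [] | apply/matrixP => [[]] | rewrite sub0mx].
have [G [hG hGV hGS]] : exists G : 'M_(s, n), [/\ G *m G^T = 1%:M, G *m V^T = 0 & (G <= S)%MS] by apply: IH; lia.
set M := col_mx V G.
have hM : M *m M^T = 1%:M.
  exact: orth_col.
have hr := rank_orth hM.
have [u [huS huM hu1]] := @ortho_ext _ _ _ S M ltac:(rewrite hr; lia).
move: huM; rewrite /M tr_col_mx mul_mx_row => /eqP; rewrite -row_mx0 => /eqP/eq_row_mx [huV huG].
exists (col_mx u G); split.
- have hGu : G *m u^T = 0 by rewrite -[G *m _]trmxK trmx_mul trmxK huG trmx0.
  have h := orth_col (dot1 hu1) hG hGu; exact h.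
- have h := mul_col_mx u G V^T; rewrite huV hGV col_mx0 in h; exact h.
- have h := col_mx_sub u G S; rewrite huS hGS in h; exact h.
Qed.

Lemma basis_with n (e : 'rV[R]_n.+1) : dot e e = 1 ->
  exists F : 'M[R]_n.+1, F *m F^T = 1%:M /\ row 0 F = e.
Proof.
move=> he.
have [G [hG hGe _]] := @orth_complete n 1 n.+1 1%:M e (dot1 he) (submx1 _) ltac:(by rewrite mxrank1).
exists (col_mx e G); split.
- have h := orth_col (dot1 he) hG hGe; exact h.
- apply/rowP => j; rewrite mxE.
  have -> : (0 : 'I_n.+1) = lshift n (0 : 'I_1) by apply/val_inj.
  have h := col_mxEu e G 0 j; exact h.
Qed.
End Dot.

Section Mu.
Variables (R : rcfType) (k m : nat) (mu : 'rV[R]_m -> 'rV[R]_k -> 'rV[R]_k).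
Hypothesis hmu : isometric_bilinear mu.

Lemma mu_linl a x x' y : mu (a *: x + x') y = a *: mu x y + mu x' y.
Proof. by case: hmu => [[h _] _]. Qed.
Lemma mu_linr a x y y' : mu x (a *: y + y') = a *: mu x y + mu x y'.
Proof. by case: hmu => [[_ h] _]. Qed.
Lemma mu_addl x x' y : mu (x + x') y = mu x y + mu x' y.
Proof. by have := mu_linl 1 x x' y; rewrite !scale1r. Qed.
Lemma mu_addr x y y' : mu x (y + y') = mu x y + mu x y'.
Proof. by have := mu_linr 1 x y y'; rewrite !scale1r. Qed.
Lemma mu0r x : mu x 0 = 0.
Proof. have h := mu_addr x 0 0; rewrite addr0 in h; apply: (addrI (mu x 0)); by rewrite addr0 -h. Qed.
Lemma mu0l y : mu 0 y = 0.
Proof. have h := mu_addl 0 0 y; rewrite addr0 in h; apply: (addrI (mu 0 y)); by rewrite addr0 -h. Qed.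
Lemma muZr a x y : mu x (a *: y) = a *: mu x y.
Proof. by rewrite -[a *: y]addr0 mu_linr mu0r addr0. Qed.
Lemma muZl a x y : mu (a *: x) y = a *: mu x y.
Proof. by rewrite -[a *: x]addr0 mu_linl mu0l addr0. Qed.

Definition Mu x : 'M[R]_k := \matrix_(i, j) mu x (delta_mx 0 i) 0 j.

Lemma row_Mu x i : row i (Mu x) = mu x (delta_mx 0 i).
Proof. by apply/rowP => j; rewrite !mxE. Qed.

Lemma muE x y : mu x y = y *m Mu x.
Proof.
rewrite {1}(row_sum_delta y) mulmx_sum_row.
elim/big_rec2: _ => [|i a b _ h]; first by rewrite mu0r.
by rewrite mu_addr muZr row_Mu -h.
Qed.

Lemma MuD a x x' : Mu (a *: x + x') = a *: Mu x + Mu x'.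
Proof. by apply/matrixP => i j; rewrite !mxE mu_linl !mxE. Qed.

Lemma Mu_sum (I : finType) (c : I -> R) (v : I -> 'rV[R]_m) :
  Mu (\sum_i c i *: v i) = \sum_i c i *: Mu (v i).
Proof.
elim/big_rec2: _ => [|i a b _ h].
  by apply/matrixP => i j; rewrite !mxE mu0l mxE.
by rewrite MuD; congr (_ + _); rewrite h.
Qed.

Lemma mu_norm2 x y : dot (mu x y) (mu x y) = dot x x * dot y y.
Proof.
case: hmu => _ /(_ x y); rewrite !vnormE => h.
have := congr1 (fun t => t ^+ 2) h; rewrite /= exprMn !sqr_sqrtr //; exact: dot_ge0.
Qed.

Lemma mu_pol1 x y y' : dot (mu x y) (mu x y') = dot x x * dot y y'.
Proof.
have := mu_norm2 x (y + y').
rewrite mu_addr !dotDl !dotDr !mu_norm2 (dotC (mu x y')) (dotC y') !mulrDr.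
lra.
Qed.

Lemma mu_pol x x' y y' :
  dot (mu x y) (mu x' y') + dot (mu x' y) (mu x y') = 2 * dot x x' * dot y y'.
Proof.
have := mu_pol1 (x + x') y y'.
rewrite !mu_addl !dotDl !dotDr !mu_pol1 (dotC x') !mulrDl.
lra.
Qed.

Lemma dot_rows n p (A B : 'M[R]_(n, p)) i j : (A *m B^T) i j = dot (row i A) (row j B).
Proof. by rewrite /dot !mxE; apply: eq_bigr => l _; rewrite !mxE. Qed.

Lemma dot_delta (i j : 'I_k) : dot (delta_mx 0 i) (delta_mx 0 j) = (i == j)%:R :> R.
Proof. by rewrite /dot trmx_delta mul_delta_mx_cond; case: (i == j); rewrite ?mulr1n ?mulr0n !mxE. Qed.

Lemma Mu_orth x : Mu x *m (Mu x)^T = (dot x x)%:M.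
Proof.
apply/matrixP => i j; rewrite dot_rows !row_Mu mu_pol1 !mxE dot_delta.
by case: (i == j); rewrite ?mulr1 ?mulr0.
Qed.

Lemma Mu_pol x x' : Mu x *m (Mu x')^T + Mu x' *m (Mu x)^T = (2 * dot x x')%:M.
Proof.
apply/matrixP => i j; rewrite mxE !dot_rows !row_Mu mu_pol !mxE dot_delta.
by case: (i == j); rewrite ?mulr1 ?mulr0.
Qed.
End Mu.

Section Alg.
Variable R : rcfType.

Definition Lm k (a : 'rV[R]_k) : 'M[R]_k := \matrix_(l < k, i < k) \sum_(j < k) qcoef R i j l * a 0 j.

Lemma amulE k (a b : 'rV[R]_k) : amul a b = b *m Lm a.
Proof.
apply/rowP => i; rewrite !mxE exchange_big /=; apply: eq_bigr => l _.
rewrite !mxE mulr_sumr; apply: eq_bigr => j _; ring.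
Qed.

Lemma LmD k c (a a' : 'rV[R]_k) : Lm (c *: a + a') = c *: Lm a + Lm a'.
Proof.
apply/matrixP => l i; rewrite !mxE mulr_sumr -big_split /=; apply: eq_bigr => j _.
rewrite !mxE; ring.
Qed.

Lemma Lm_sum k (I : finType) (c : I -> R) (v : I -> 'rV[R]_k) :
  Lm (\sum_i c i *: v i) = \sum_i c i *: Lm (v i).
Proof.
elim/big_rec2: _ => [|i a b _ h].
  by apply/matrixP => i j; rewrite !mxE big1 // => l _; rewrite mxE mulr0.
by rewrite LmD; congr (_ + _); rewrite h.
Qed.

Lemma Lm_one k : Lm (aone R k.+1) = 1%:M.
Proof.
apply/matrixP => l i; rewrite !mxE (bigD1 ord0) //= big1 => [|j hj]; last first.
  by rewrite mxE; case: j hj => [[|j] hj] //= _; rewrite mulr0.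
rewrite mxE /= mulr1 addr0 /qcoef /=.
have -> : ((l : nat) == i) = (l == i) by [].
by case: (l == i); rewrite ?mulr1n ?mulr0n.
Qed.

Lemma orth_iso m n (P : 'M[R]_(m, n)) : P *m P^T = 1%:M -> lin_isometry P.
Proof. by move=> h x; rewrite !vnormE mulmx_dot h mulmx1. Qed.

Lemma orthT n (P : 'M[R]_n) : P *m P^T = 1%:M -> P^T *m P = 1%:M.
Proof. exact: mulmx1C. Qed.

Lemma mxext m n (P Q : 'M[R]_(m, n)) : (forall v : 'rV[R]_m, v *m P = v *m Q) -> P = Q.
Proof. by move=> h; apply/row_matrixP => i; rewrite !rowE h. Qed.

Lemma assemble k m (mu : 'rV[R]_m -> 'rV[R]_k -> 'rV[R]_k) (W : 'M[R]_k)
   (eX : 'rV[R]_m) (eY : 'rV[R]_k) (F : 'M[R]_m) (Wb : 'M[R]_(m, k)) (PY : 'M[R]_k)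
   (i0 : 'I_m) :
  isometric_bilinear mu -> dot eX eX = 1 ->
  F *m F^T = 1%:M -> row i0 F = eX -> Wb *m Wb^T = 1%:M -> row i0 Wb = aone R k ->
  (Wb <= W)%MS -> PY *m PY^T = 1%:M -> eY *m PY = aone R k ->
  (forall i, Mu mu (row i F) *m (Mu mu eX)^T *m PY = PY *m Lm (row i Wb)) ->
  exists (PX : 'M[R]_(m, k)) (PY PZ : 'M[R]_k),
      [/\ lin_isometry PX, lin_isometry PY, lin_isometry PZ,
          (forall x : 'rV[R]_m, (x *m PX <= W)%MS) &
          (forall x y, mu x y *m PZ = amul (x *m PX) (y *m PY))]
      /\ eX *m PX = aone R k /\ eY *m PY = aone R k.
Proof.
move=> hmu heX hF hF0 hWb hWb0 hWbW hPY heY hrel.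
have hFT := orthT hF.
have hA : Mu mu eX *m (Mu mu eX)^T = 1%:M by rewrite Mu_orth // heX.
have hAT := orthT hA.
exists (F^T *m Wb), PY, ((Mu mu eX)^T *m PY); split; [split|split].
- apply: orth_iso; rewrite trmx_mul trmxK mulmxA -(mulmxA _ Wb) hWb mulmx1 hFT //.
- exact: orth_iso.
- apply: orth_iso; rewrite trmx_mul trmxK mulmxA -(mulmxA _ PY) hPY mulmx1 hAT //.
- by move=> x; rewrite mulmxA; apply: submx_trans (submxMl _ _) hWbW.
- move=> x y; rewrite amulE (muE hmu) -!mulmxA; congr (_ *m _).
  have hx : x = \sum_i (x *m F^T) 0 i *: row i F.
    by rewrite -mulmx_sum_row -mulmxA hFT mulmx1.
  have hxP : x *m (F^T *m Wb) = \sum_i (x *m F^T) 0 i *: row i Wb.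
    by rewrite mulmxA mulmx_sum_row.
  rewrite hxP Lm_sum {1}hx (Mu_sum hmu) mulmxA mulmx_suml mulmx_suml mulmx_sumr.
  by apply: eq_bigr => i _; rewrite -!scalemxAl hrel -scalemxAr.
- rewrite mulmxA -hF0 -row_mul hF row1 -rowE //.
- exact: heY.
Qed.
End Alg.

Section Quat.
Variable R : rcfType.

Definition q4 (x0 x1 x2 x3 : R) : 'rV[R]_4 := \row_(i < 4) nth 0 [:: x0; x1; x2; x3] i.
Definition o0 : 'I_4 := @Ordinal 4 0 isT.
Definition o1 : 'I_4 := @Ordinal 4 1 isT.
Definition o2 : 'I_4 := @Ordinal 4 2 isT.
Definition o3 : 'I_4 := @Ordinal 4 3 isT.

Lemma q4_eta (v : 'rV[R]_4) : v = q4 (v 0 o0) (v 0 o1) (v 0 o2) (v 0 o3).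
Proof.
apply/rowP => i; rewrite mxE; case: i => [[|[|[|[|i]]]] hi] //=;
 congr (v 0 _); exact/val_inj.
Qed.

Lemma q4E (a0 a1 a2 a3 b0 b1 b2 b3 : R) :
  q4 a0 a1 a2 a3 = q4 b0 b1 b2 b3 <-> [/\ a0 = b0, a1 = b1, a2 = b2 & a3 = b3].
Proof.
split => [h|[-> -> -> ->]] //.
by split; [move/rowP: h => /(_ o0) | move/rowP: h => /(_ o1) | move/rowP: h => /(_ o2) | move/rowP: h => /(_ o3)]; rewrite !mxE.
Qed.

Lemma dot_q4 (a0 a1 a2 a3 b0 b1 b2 b3 : R) :
  dot (q4 a0 a1 a2 a3) (q4 b0 b1 b2 b3) = a0 * b0 + a1 * b1 + a2 * b2 + a3 * b3.
Proof. rewrite dotE !big_ord_recl big_ord0 !mxE /=. ring. Qed.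

Lemma amul_q4 (a0 a1 a2 a3 b0 b1 b2 b3 : R) :
  amul (q4 a0 a1 a2 a3) (q4 b0 b1 b2 b3) =
  q4 (a0*b0 - a1*b1 - a2*b2 - a3*b3) (a0*b1 + a1*b0 + a2*b3 - a3*b2)
     (a0*b2 - a1*b3 + a2*b0 + a3*b1) (a0*b3 + a1*b2 - a2*b1 + a3*b0).
Proof.
apply/rowP => i; rewrite !mxE !big_ord_recl !big_ord0 !mxE /=.
case: i => [[|[|[|[|i]]]] hi] //=; rewrite /qcoef /=; ring.
Qed.

Lemma q4D a0 a1 a2 a3 b0 b1 b2 b3 :
  q4 a0 a1 a2 a3 + q4 b0 b1 b2 b3 = q4 (a0 + b0) (a1 + b1) (a2 + b2) (a3 + b3).
Proof. by apply/rowP => i; rewrite !mxE; case: i => [[|[|[|[|i]]]] hi]. Qed.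
Lemma q4Z c a0 a1 a2 a3 : c *: q4 a0 a1 a2 a3 = q4 (c * a0) (c * a1) (c * a2) (c * a3).
Proof. by apply/rowP => i; rewrite !mxE; case: i => [[|[|[|[|i]]]] hi]. Qed.
Lemma q4N a0 a1 a2 a3 : - q4 a0 a1 a2 a3 = q4 (- a0) (- a1) (- a2) (- a3).
Proof. by apply/rowP => i; rewrite !mxE; case: i => [[|[|[|[|i]]]] hi]. Qed.
Lemma q4B a0 a1 a2 a3 b0 b1 b2 b3 :
  q4 a0 a1 a2 a3 - q4 b0 b1 b2 b3 = q4 (a0 - b0) (a1 - b1) (a2 - b2) (a3 - b3).
Proof. by rewrite q4N q4D. Qed.
Lemma aone4 : aone R 4 = q4 1 0 0 0.
Proof. by apply/rowP => i; rewrite !mxE; case: i => [[|[|[|[|i]]]] hi]. Qed.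

Ltac qsimp := rewrite ?(aone4, amul_q4, dot_q4, q4B, q4D, q4Z, q4N, mxE) /=.
Ltac qfin := first [apply/q4E; split; ring | ring].

Lemma q_assoc (a b c : 'rV[R]_4) : amul a (amul b c) = amul (amul a b) c.
Proof. rewrite (q4_eta a) (q4_eta b) (q4_eta c); qsimp; qfin. Qed.
Lemma q_norm (a b : 'rV[R]_4) : dot (amul a b) (amul a b) = dot a a * dot b b.
Proof. rewrite (q4_eta a) (q4_eta b); qsimp; qfin. Qed.
Lemma q_dot_l (a b : 'rV[R]_4) : dot (amul a b) a = dot a a * b 0 o0.
Proof. rewrite (q4_eta a) (q4_eta b); qsimp; qfin. Qed.
Lemma q_dot_r (a b : 'rV[R]_4) : dot (amul a b) b = dot b b * a 0 o0.
Proof. rewrite (q4_eta a) (q4_eta b); qsimp; qfin. Qed.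
Lemma q_dot_1 (a b : 'rV[R]_4) : dot (amul a b) (aone R 4) = 2 * a 0 o0 * b 0 o0 - dot a b.
Proof. rewrite (q4_eta a) (q4_eta b); qsimp; qfin. Qed.
Lemma q_sq (a : 'rV[R]_4) : amul a a = (2 * a 0 o0) *: a - dot a a *: aone R 4.
Proof. rewrite (q4_eta a); qsimp; qfin. Qed.
Lemma q_ac (a b : 'rV[R]_4) :
  amul a b + amul b a = (2 * a 0 o0) *: b + (2 * b 0 o0) *: a - (2 * dot a b) *: aone R 4.
Proof. rewrite (q4_eta a) (q4_eta b); qsimp; qfin. Qed.
Lemma q_one_r (a : 'rV[R]_4) : amul a (aone R 4) = a.
Proof. rewrite {1}(q4_eta a); qsimp. rewrite [RHS](q4_eta a); qfin. Qed.
Lemma q_one_l (a : 'rV[R]_4) : amul (aone R 4) a = a.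
Proof. rewrite {1}(q4_eta a); qsimp. rewrite [RHS](q4_eta a); qfin. Qed.
Lemma q_dot1 (a : 'rV[R]_4) : dot a (aone R 4) = a 0 o0.
Proof. rewrite (q4_eta a); qsimp; qfin. Qed.
Lemma q_conj_r (a : 'rV[R]_4) :
  amul a ((2 * dot a (aone R 4)) *: aone R 4 - a) = dot a a *: aone R 4.
Proof. rewrite (q4_eta a); qsimp; qfin. Qed.
Lemma q_conj_l (a : 'rV[R]_4) :
  amul ((2 * dot a (aone R 4)) *: aone R 4 - a) a = dot a a *: aone R 4.
Proof. rewrite (q4_eta a); qsimp; qfin. Qed.

Definition c2 (x0 x1 : R) : 'rV[R]_2 := \row_(i < 2) nth 0 [:: x0; x1] i.
Definition p0 : 'I_2 := @Ordinal 2 0 isT.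
Definition p1 : 'I_2 := @Ordinal 2 1 isT.
Lemma c2_eta (v : 'rV[R]_2) : v = c2 (v 0 p0) (v 0 p1).
Proof.
apply/rowP => i; rewrite mxE; case: i => [[|[|i]] hi] //=;
 congr (v 0 _); exact/val_inj.
Qed.
Lemma c2E (a0 a1 b0 b1 : R) : c2 a0 a1 = c2 b0 b1 <-> a0 = b0 /\ a1 = b1.
Proof.
split => [h|[-> ->]] //.
by split; [move/rowP: h => /(_ p0) | move/rowP: h => /(_ p1)]; rewrite !mxE.
Qed.
Lemma dot_c2 a0 a1 b0 b1 : dot (c2 a0 a1) (c2 b0 b1) = a0 * b0 + a1 * b1.
Proof. rewrite dotE !big_ord_recl big_ord0 !mxE /=. ring. Qed.
Lemma amul_c2 a0 a1 b0 b1 : amul (c2 a0 a1) (c2 b0 b1) = c2 (a0*b0 - a1*b1) (a0*b1 + a1*b0).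
Proof.
apply/rowP => i; rewrite !mxE !big_ord_recl !big_ord0 !mxE /=.
case: i => [[|[|i]] hi] //=; rewrite /qcoef /=; ring.
Qed.
Lemma c2D a0 a1 b0 b1 : c2 a0 a1 + c2 b0 b1 = c2 (a0 + b0) (a1 + b1).
Proof. by apply/rowP => i; rewrite !mxE; case: i => [[|[|i]] hi]. Qed.
Lemma c2Z c a0 a1 : c *: c2 a0 a1 = c2 (c * a0) (c * a1).
Proof. by apply/rowP => i; rewrite !mxE; case: i => [[|[|i]] hi]. Qed.
Lemma c2N a0 a1 : - c2 a0 a1 = c2 (- a0) (- a1).
Proof. by apply/rowP => i; rewrite !mxE; case: i => [[|[|i]] hi]. Qed.
Lemma c2B a0 a1 b0 b1 : c2 a0 a1 - c2 b0 b1 = c2 (a0 - b0) (a1 - b1).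
Proof. by rewrite c2N c2D. Qed.
Lemma aone2 : aone R 2 = c2 1 0.
Proof. by apply/rowP => i; rewrite !mxE; case: i => [[|[|i]] hi]. Qed.
Ltac csimp := rewrite ?(aone2, amul_c2, dot_c2, c2B, c2D, c2Z, c2N, mxE) /=.
Ltac cfin := first [apply/c2E; split; ring | ring].

Lemma c_assoc (a b c : 'rV[R]_2) : amul a (amul b c) = amul (amul a b) c.
Proof. rewrite (c2_eta a) (c2_eta b) (c2_eta c); csimp; cfin. Qed.
Lemma c_norm (a b : 'rV[R]_2) : dot (amul a b) (amul a b) = dot a a * dot b b.
Proof. rewrite (c2_eta a) (c2_eta b); csimp; cfin. Qed.
Lemma c_sq (a : 'rV[R]_2) : amul a a = (2 * a 0 p0) *: a - dot a a *: aone R 2.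
Proof. rewrite (c2_eta a); csimp; cfin. Qed.
Lemma c_one_r (a : 'rV[R]_2) : amul a (aone R 2) = a.
Proof. rewrite {1}(c2_eta a); csimp. rewrite [RHS](c2_eta a); cfin. Qed.
Lemma c_one_l (a : 'rV[R]_2) : amul (aone R 2) a = a.
Proof. rewrite {1}(c2_eta a); csimp. rewrite [RHS](c2_eta a); cfin. Qed.
Lemma c_dot1 (a : 'rV[R]_2) : dot a (aone R 2) = a 0 p0.
Proof. rewrite (c2_eta a); csimp; cfin. Qed.
Lemma c_conj_r (a : 'rV[R]_2) :
  amul a ((2 * dot a (aone R 2)) *: aone R 2 - a) = dot a a *: aone R 2.
Proof. rewrite (c2_eta a); csimp; cfin. Qed.
Lemma c_conj_l (a : 'rV[R]_2) :
  amul ((2 * dot a (aone R 2)) *: aone R 2 - a) a = dot a a *: aone R 2.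
Proof. rewrite (c2_eta a); csimp; cfin. Qed.

Definition r1 (x : R) : 'rV[R]_1 := \row_(i < 1) x.
Lemma r1_eta (v : 'rV[R]_1) : v = r1 (v 0 0).
Proof. by apply/rowP => i; rewrite mxE ord1. Qed.
Lemma r1E a b : r1 a = r1 b <-> a = b.
Proof. by split => [/rowP /(_ 0)|->]; rewrite ?mxE. Qed.
Lemma dot_r1 a b : dot (r1 a) (r1 b) = a * b.
Proof. by rewrite dotE big_ord_recl big_ord0 !mxE addr0. Qed.
Lemma amul_r1 a b : amul (r1 a) (r1 b) = r1 (a * b).
Proof. by apply/rowP => i; rewrite !mxE !big_ord_recl !big_ord0 !mxE ord1 /= /qcoef /= !addr0 mul1r. Qed.
Lemma r1D a b : r1 a + r1 b = r1 (a + b).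
Proof. by apply/rowP => i; rewrite !mxE. Qed.
Lemma r1Z c a : c *: r1 a = r1 (c * a).
Proof. by apply/rowP => i; rewrite !mxE. Qed.
Lemma r1N a : - r1 a = r1 (- a).
Proof. by apply/rowP => i; rewrite !mxE. Qed.
Lemma r1B a b : r1 a - r1 b = r1 (a - b).
Proof. by rewrite r1N r1D. Qed.
Lemma aone1 : aone R 1 = r1 1.
Proof. by apply/rowP => i; rewrite !mxE ord1. Qed.
Ltac rsimp := rewrite ?(aone1, amul_r1, dot_r1, r1B, r1D, r1Z, r1N, mxE) /=.
Ltac rfin := first [apply/r1E; ring | ring].

Lemma r_assoc (a b c : 'rV[R]_1) : amul a (amul b c) = amul (amul a b) c.
Proof. rewrite (r1_eta a) (r1_eta b) (r1_eta c); rsimp; rfin. Qed.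
Lemma r_norm (a b : 'rV[R]_1) : dot (amul a b) (amul a b) = dot a a * dot b b.
Proof. rewrite (r1_eta a) (r1_eta b); rsimp; rfin. Qed.
Lemma r_one_l (a : 'rV[R]_1) : amul (aone R 1) a = a.
Proof. rewrite {1}(r1_eta a); rsimp. rewrite [RHS](r1_eta a); rfin. Qed.
Lemma r_conj_r (a : 'rV[R]_1) :
  amul a ((2 * dot a (aone R 1)) *: aone R 1 - a) = dot a a *: aone R 1.
Proof. rewrite (r1_eta a); rsimp; rfin. Qed.
Lemma r_conj_l (a : 'rV[R]_1) :
  amul ((2 * dot a (aone R 1)) *: aone R 1 - a) a = dot a a *: aone R 1.
Proof. rewrite (r1_eta a); rsimp; rfin. Qed.
End Quat.

Section Cliff.
Variables (R : rcfType) (k m : nat) (mu : 'rV[R]_m -> 'rV[R]_k -> 'rV[R]_k).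
Hypothesis hmu : isometric_bilinear mu.
Variable eX : 'rV[R]_m.
Hypothesis heX : dot eX eX = 1.

Definition JJ x := Mu mu x *m (Mu mu eX)^T.

Lemma AT_A : (Mu mu eX)^T *m Mu mu eX = 1%:M.
Proof. by apply: orthT; rewrite Mu_orth // heX. Qed.

Lemma JJ_T x : (JJ x)^T = Mu mu eX *m (Mu mu x)^T.
Proof. by rewrite /JJ trmx_mul trmxK. Qed.

Lemma JJ_skew x : dot x eX = 0 -> (JJ x)^T = - JJ x.
Proof.
move=> h; apply/eqP; rewrite -addr_eq0 JJ_T /JJ addrC.
by rewrite Mu_pol // h mulr0; apply/eqP/matrixP => i j; rewrite !mxE mul0rn.
Qed.

Lemma JJ_JJT x x' : JJ x *m (JJ x')^T = Mu mu x *m (Mu mu x')^T.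
Proof. by rewrite JJ_T /JJ mulmxA -(mulmxA _ _ (Mu mu eX)) AT_A mulmx1. Qed.

Lemma JJ_sq x : dot x eX = 0 -> dot x x = 1 -> JJ x *m JJ x = -1%:M.
Proof.
move=> h1 h2; have := JJ_JJT x x; rewrite JJ_skew // Mu_orth // h2 mulmxN => /eqP.
by rewrite eqr_oppLR => /eqP ->.
Qed.

Lemma JJ_ac x x' : dot x eX = 0 -> dot x' eX = 0 -> dot x x' = 0 ->
  JJ x *m JJ x' = - (JJ x' *m JJ x).
Proof.
move=> h1 h2 h3; have := Mu_pol hmu x x'; rewrite h3 mulr0 -!JJ_JJT !JJ_skew //.
rewrite !mulmxN => h; apply/eqP; rewrite -addr_eq0 -oppr_eq0 opprD h.
by apply/eqP/matrixP => i j; rewrite !mxE mul0rn.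
Qed.
End Cliff.

Section Skew.
Variables (R : rcfType) (n : nat).
Implicit Types (J : 'M[R]_n) (v w : 'rV[R]_n).

Lemma dot_mxT v w J : dot (v *m J) w = dot v (w *m J^T).
Proof. by rewrite /dot trmx_mul trmxK mulmxA. Qed.

Lemma dotJ v w J : J^T = - J -> J *m J = - 1%:M -> dot (v *m J) (w *m J) = dot v w.
Proof. by move=> h1 h2; rewrite dot_mxT -mulmxA h1 mulmxN h2 opprK mulmx1. Qed.

Lemma dotJl v w J : J^T = - J -> dot (v *m J) w = - dot v (w *m J).
Proof. by move=> h; rewrite dot_mxT h mulmxN dotNr. Qed.

Lemma dotJv v J : J^T = - J -> dot (v *m J) v = 0.
Proof. move=> h; have e := dotJl v v h; rewrite (dotC v) in e; lra. Qed.

Lemma dotJJ v J1 J2 : J1^T = - J1 -> J2^T = - J2 -> J1 *m J2 = - (J2 *m J1) ->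
  dot (v *m J1) (v *m J2) = 0.
Proof.
move=> h1 h2 h3.
have e1 := dotJl v (v *m J2) h1.
have e2 := dotJl v (v *m J1) h2.
rewrite (dotC (v *m J2)) -!mulmxA h3 mulmxN dotNr in e2.
rewrite -mulmxA in e1; lra.
Qed.

Lemma conj_rel (J L S B C : 'M[R]_n) :
  B *m B^T = 1%:M -> C *m C^T = 1%:M -> B *m J = S *m B -> C *m L = S *m C ->
  J *m (B^T *m C) = (B^T *m C) *m L.
Proof.
move=> hB hC h1 h2; have hBT := orthT hB; have hCT := orthT hC.
have eJ : J = B^T *m S *m B by rewrite -[J]mul1mx -hBT -mulmxA h1 mulmxA.
have eL : L = C^T *m S *m C by rewrite -[L]mul1mx -hCT -mulmxA h2 mulmxA.
rewrite eJ eL !mulmxA -(mulmxA (B^T *m S) B B^T) hB mulmx1.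
by rewrite -(mulmxA B^T C C^T) hC mulmx1.
Qed.
End Skew.

Section Rows.
Variables (R : rcfType) (n : nat).
Implicit Types (a b c d : 'rV[R]_n).

Definition mx2 a b : 'M[R]_(2, n) := \matrix_(i < 2) nth 0 [:: a; b] i.
Definition mx3 a b c : 'M[R]_(3, n) := \matrix_(i < 3) nth 0 [:: a; b; c] i.
Definition mx4 a b c d : 'M[R]_(4, n) := \matrix_(i < 4) nth 0 [:: a; b; c; d] i.

Lemma row_mx2 a b i : row i (mx2 a b) = nth 0 [:: a; b] i.
Proof. by apply/rowP => j; rewrite !mxE. Qed.
Lemma row_mx3 a b c i : row i (mx3 a b c) = nth 0 [:: a; b; c] i.
Proof. by apply/rowP => j; rewrite !mxE. Qed.
Lemma row_mx4 a b c d i : row i (mx4 a b c d) = nth 0 [:: a; b; c; d] i.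
Proof. by apply/rowP => j; rewrite !mxE. Qed.

Lemma orth_rows p (V : 'M[R]_(p, n)) :
  (forall i j, dot (row i V) (row j V) = (i == j)%:R) -> V *m V^T = 1%:M.
Proof. by move=> h; apply/matrixP => i j; rewrite dot_rows h mxE. Qed.

Lemma rows_orth p (V : 'M[R]_(p, n)) :
  V *m V^T = 1%:M -> forall i j, dot (row i V) (row j V) = (i == j)%:R.
Proof. by move=> h i j; rewrite -dot_rows h mxE. Qed.

Lemma orth2 a b : dot a a = 1 -> dot b b = 1 -> dot a b = 0 -> mx2 a b *m (mx2 a b)^T = 1%:M.
Proof.
move=> h1 h2 h3; apply: orth_rows => i j; rewrite !row_mx2.
by case: i => [[|[|i]] hi] //; case: j => [[|[|j]] hj] //=; rewrite ?(dotC b) //.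
Qed.

Lemma orth3 a b c : dot a a = 1 -> dot b b = 1 -> dot c c = 1 ->
  dot a b = 0 -> dot a c = 0 -> dot b c = 0 -> mx3 a b c *m (mx3 a b c)^T = 1%:M.
Proof.
move=> h1 h2 h3 h4 h5 h6; apply: orth_rows => i j; rewrite !row_mx3.
by case: i => [[|[|[|i]]] hi] //; case: j => [[|[|[|j]]] hj] //=;
  rewrite ?(dotC b a) ?(dotC c a) ?(dotC c b).
Qed.

Lemma orth4 a b c d : dot a a = 1 -> dot b b = 1 -> dot c c = 1 -> dot d d = 1 ->
  dot a b = 0 -> dot a c = 0 -> dot a d = 0 -> dot b c = 0 -> dot b d = 0 -> dot c d = 0 ->
  mx4 a b c d *m (mx4 a b c d)^T = 1%:M.
Proof.
move=> h1 h2 h3 h4 h5 h6 h7 h8 h9 h10; apply: orth_rows => i j; rewrite !row_mx4.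
by case: i => [[|[|[|[|i]]]] hi] //; case: j => [[|[|[|[|j]]]] hj] //=;
  rewrite ?(dotC b a) ?(dotC c a) ?(dotC d a) ?(dotC c b) ?(dotC d b) ?(dotC d c).
Qed.

Lemma sub_rows p (V : 'M[R]_(p, n)) m (W : 'M[R]_(m, n)) :
  (forall i, (row i V <= W)%MS) -> (V <= W)%MS.
Proof. by move=> h; apply/row_subP. Qed.

Lemma ortho_rows p (V : 'M[R]_(p, n)) u : u *m V^T = 0 -> forall i, dot u (row i V) = 0.
Proof.
move=> h i; have := congr1 (fun M : 'M[R]_(1, p) => M 0 i) h; rewrite !mxE => e.
by rewrite /dot mxE -[RHS]e; apply: eq_bigr => j _; rewrite !mxE.
Qed.
End Rows.

Definition goodA (R : rcfType) k m (mu : 'rV[R]_m -> 'rV[R]_k -> 'rV[R]_k) (W : 'M[R]_k) :=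
  exists (PX : 'M[R]_(m, k)) (PY PZ : 'M[R]_k),
      [/\ lin_isometry PX, lin_isometry PY, lin_isometry PZ,
          (forall x : 'rV[R]_m, (x *m PX <= W)%MS) &
          (forall x y, mu x y *m PZ = amul (x *m PX) (y *m PY))].

Definition goodB (R : rcfType) k m (mu : 'rV[R]_m -> 'rV[R]_k -> 'rV[R]_k) (W : 'M[R]_k) eX eY :=
  exists (PX : 'M[R]_(m, k)) (PY PZ : 'M[R]_k),
      [/\ lin_isometry PX, lin_isometry PY, lin_isometry PZ,
          (forall x : 'rV[R]_m, (x *m PX <= W)%MS) &
          (forall x y, mu x y *m PZ = amul (x *m PX) (y *m PY))]
      /\ eX *m PX = aone R k /\ eY *m PY = aone R k.

Section Gen.
Variable R : rcfType.

Lemma aone_delta n : aone R n.+1 = delta_mx 0 0.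
Proof. by apply/rowP => j; rewrite !mxE eqxx /=; case: j => [[|j] hj]. Qed.

Lemma dot_aone n : dot (aone R n.+1) (aone R n.+1) = 1.
Proof. by rewrite aone_delta dot_delta eqxx. Qed.

Lemma row0_1 n (v : 'M[R]_(1, n)) : row 0 v = v.
Proof. by apply/rowP => j; rewrite mxE. Qed.

Lemma row_orth_delta n (B : 'M[R]_n) (i : 'I_n) : B *m B^T = 1%:M -> row i B *m B^T = delta_mx 0 i.
Proof. by move=> h; rewrite -row_mul h row1. Qed.

Lemma Hrel0 k m (mu : 'rV[R]_m -> 'rV[R]_k.+1 -> 'rV[R]_k.+1) eX (PY : 'M[R]_k.+1) :
  isometric_bilinear mu -> dot eX eX = 1 ->
  Mu mu eX *m (Mu mu eX)^T *m PY = PY *m Lm (aone R k.+1).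
Proof. by move=> hmu h; rewrite Mu_orth // h mul1mx Lm_one mulmx1. Qed.

Lemma core_m1 n (mu : 'rV[R]_1 -> 'rV[R]_n.+1 -> 'rV[R]_n.+1) W eX eY :
  isometric_bilinear mu -> (aone R n.+1 <= W)%MS -> dot eX eX = 1 -> dot eY eY = 1 ->
  goodB mu W eX eY.
Proof.
move=> hmu hW heX heY.
have [F [hF hF0]] := basis_with heX.
have [B [hB hB0]] := basis_with heY.
apply: (@assemble R n.+1 1 mu W eX eY F (aone R n.+1) B^T 0) => //.
- exact: dot1 (dot_aone n).
- exact: row0_1.
- by rewrite trmxK orthT.
- by rewrite -hB0 row_orth_delta // aone_delta.
- by move=> i; rewrite ord1 !row0_1; rewrite row0_1 in hF0; rewrite hF0 Hrel0.
Qed.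

(* the (a) part from a (b)-type core, by left multiplication by a unit *)
Lemma trick k m (mu : 'rV[R]_m -> 'rV[R]_k -> 'rV[R]_k) W :
  (forall a b c : 'rV[R]_k, amul a (amul b c) = amul (amul a b) c) ->
  (forall a b : 'rV[R]_k, dot (amul a b) (amul a b) = dot a a * dot b b) ->
  (forall a : 'rV[R]_k, amul a ((2 * dot a (aone R k)) *: aone R k - a) = dot a a *: aone R k) ->
  (forall a : 'rV[R]_k, amul ((2 * dot a (aone R k)) *: aone R k - a) a = dot a a *: aone R k) ->
  (forall a : 'rV[R]_k, amul (aone R k) a = a) ->
  (0 < \rank W)%N ->
  (forall W' : 'M[R]_k, (\rank W <= \rank W')%N -> (aone R k <= W')%MS -> goodA mu W') ->
  goodA mu W.
Proof.
move=> hA hN hC1 hC2 h1 hr hcore.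
have [w0 [hw0W _ hw0]] := @ortho_ext R k 0 k W 0 ltac:(by rewrite mxrank0).
set c := (2 * dot w0 (aone R k)) *: aone R k - w0.
have hcw : Lm c *m Lm w0 = 1%:M.
  apply: mxext => v; rewrite mulmxA -!amulE hA hC1 hw0 scale1r h1 mulmx1 //.
have [||PX [PY [PZ [i1 i2 i3 i4 i5]]]] := hcore (W *m Lm c).
- by rewrite -{1}[W]mulmx1 -hcw mulmxA mxrankM_maxl.
- have e : aone R k = w0 *m Lm c by rewrite -amulE hC2 hw0 scale1r.
  by rewrite e submxMr.
exists (PX *m Lm w0), PY, (PZ *m Lm w0); split => //.
- by move=> x; rewrite !vnormE mulmxA -amulE hN hw0 mul1r -vnormE i1 vnormE.
- by move=> x; rewrite !vnormE mulmxA -amulE hN hw0 mul1r -vnormE i3 vnormE.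
- move=> x; rewrite mulmxA -[W]mulmx1 -hcw mulmxA submxMr //.
- by move=> x y; rewrite mulmxA i5 -amulE hA (mulmxA x) -amulE.
Qed.
End Gen.

Section K2.
Variable R : rcfType.

Lemma delta_mul n p (B : 'M[R]_(n, p)) (s : 'I_n) : delta_mx 0 s *m B = row s B.
Proof. by rewrite rowE. Qed.

Lemma rowsF n (F : 'M[R]_n) i j : F *m F^T = 1%:M -> dot (row i F) (row j F) = (i == j)%:R.
Proof. by move=> h; rewrite rows_orth. Qed.

Lemma full_sub n (W : 'M[R]_n) p (V : 'M[R]_(p, n)) : (n <= \rank W)%N -> (V <= W)%MS.
Proof. by move=> h; apply: submx_full; rewrite /row_full eqn_leq rank_leq_col h. Qed.

Lemma core22 (mu : 'rV[R]_2 -> 'rV[R]_2 -> 'rV[R]_2) W eX eY :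
  isometric_bilinear mu -> (2 <= \rank W)%N -> dot eX eX = 1 -> dot eY eY = 1 ->
  goodB mu W eX eY.
Proof.
move=> hmu hW heX heY.
have [F [hF hF0]] := basis_with heX.
set f1 := row p1 F.
have hf1X : dot f1 eX = 0 by rewrite -hF0 rowsF.
have hf11 : dot f1 f1 = 1 by rewrite rowsF // eqxx.
set J1 := JJ mu eX f1.
have hJs : J1^T = - J1 by apply: JJ_skew.
have hJq : J1 *m J1 = - 1%:M by apply: JJ_sq.
set B := mx2 eY (eY *m J1).
have hB : B *m B^T = 1%:M.
  by apply: orth2 => //; [rewrite dotJ | rewrite dotC dotJv].
set S : 'M[R]_2 := mx2 (delta_mx 0 p1) (- delta_mx 0 p0).
have hBJ : B *m J1 = S *m B.
  apply/row_matrixP => i; rewrite !row_mul !row_mx2.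
  case: i => [[|[|i]] hi] //=; rewrite ?mulNmx delta_mul row_mx2 //=.
  by rewrite -mulmxA hJq mulmxN mulmx1.
have hL : Lm (delta_mx 0 p1) = S.
  apply/row_matrixP => i; rewrite row_mx2 rowE -amulE.
  have e0 : delta_mx 0 p0 = c2 1 0 :> 'rV[R]_2.
    by apply/rowP => j; rewrite !mxE; case: j => [[|[|j]] hj].
  have e1 : delta_mx 0 p1 = c2 0 1 :> 'rV[R]_2.
    by apply/rowP => j; rewrite !mxE; case: j => [[|[|j]] hj].
  case: i => [[|[|i]] hi] //=.
  - have -> : delta_mx 0 (Ordinal hi) = c2 1 0 :> 'rV[R]_2 by rewrite -e0; congr delta_mx; exact/val_inj.
    by rewrite e1 amul_c2; apply/c2E; split; ring.
  - have -> : delta_mx 0 (Ordinal hi) = c2 0 1 :> 'rV[R]_2 by rewrite -e1; congr delta_mx; exact/val_inj.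
    by rewrite e0 e1 amul_c2 c2N; apply/c2E; split; ring.
apply: (@assemble R 2 2 mu W eX eY F 1%:M B^T 0) => //.
- by rewrite trmx1 mulmx1.
- by rewrite row1 aone_delta.
- exact: full_sub.
- by rewrite trmxK orthT.
- by rewrite (_ : eY = row 0 B) ?row_orth_delta ?aone_delta // row_mx2.
- move=> i; case: i => [[|[|i]] hi] //.
  + have -> : Ordinal hi = 0 by exact/val_inj.
    by rewrite hF0 row1 -aone_delta Hrel0.
  + have -> : Ordinal hi = p1 by exact/val_inj.
    rewrite row1 hL -/f1 -/(JJ mu eX f1) -/J1.
    have hC : (1%:M : 'M[R]_2) *m 1%:M^T = 1%:M by rewrite trmx1 mulmx1.
    have := conj_rel hB hC hBJ (etrans (mul1mx _) (esym (mulmx1 S))).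
    by rewrite !mulmx1.
Qed.
End K2.

Section K4.
Variable R : rcfType.
Notation e_ i := (delta_mx 0 i : 'rV[R]_4).

Lemma amulNl k (a b : 'rV[R]_k) : amul (- a) b = - amul a b.
Proof.
apply/rowP => i; rewrite !mxE -sumrN; apply: eq_bigr => j _.
rewrite -sumrN; apply: eq_bigr => l _; rewrite mxE; ring.
Qed.
Lemma amulNr k (a b : 'rV[R]_k) : amul a (- b) = - amul a b.
Proof.
apply/rowP => i; rewrite !mxE -sumrN; apply: eq_bigr => j _.
rewrite -sumrN; apply: eq_bigr => l _; rewrite mxE; ring.
Qed.

Lemma imag_sq (w : 'rV[R]_4) : w 0 o0 = 0 -> dot w w = 1 -> amul w w = - aone R 4.
Proof. by move=> h0 h1; rewrite q_sq h0 h1 mulr0 scale0r scale1r add0r. Qed.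

Lemma imag_ac (a b : 'rV[R]_4) : a 0 o0 = 0 -> b 0 o0 = 0 -> dot a b = 0 ->
  amul b a = - amul a b.
Proof.
move=> ha hb hab; apply/eqP; rewrite -addr_eq0 addrC q_ac ha hb hab !mulr0 !scale0r.
by rewrite !addr0 subr0.
Qed.

Lemma dot_imag (w : 'rV[R]_4) : dot w (aone R 4) = 0 -> w 0 o0 = 0.
Proof. by rewrite q_dot1. Qed.

Definition S1 : 'M[R]_4 := mx4 (e_ o1) (- e_ o0) (e_ o3) (- e_ o2).
Definition S2 : 'M[R]_4 := mx4 (e_ o2) (- e_ o3) (- e_ o0) (e_ o1).

Lemma rowS_mul (S B : 'M[R]_4) i : row i (S *m B) = row i S *m B.
Proof. by rewrite row_mul. Qed.

Ltac r4 := let i := fresh "i" in let hi := fresh "hi" in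
  apply/row_matrixP => i; rewrite !row_mul !row_mx4;
  case: i => [[|[|[|[|i]]]] hi] //=; rewrite ?mulNmx !delta_mul !row_mx4 /=.

Lemma quad1 (J1 : 'M[R]_4) (y u w1 c : 'rV[R]_4) :
  J1^T = - J1 -> J1 *m J1 = - 1%:M -> dot y y = 1 -> dot u u = 1 ->
  dot u y = 0 -> dot u (y *m J1) = 0 ->
  w1 0 o0 = 0 -> c 0 o0 = 0 -> dot w1 w1 = 1 -> dot c c = 1 -> dot w1 c = 0 ->
  let B := mx4 y (y *m J1) u (u *m J1) in
  let C := mx4 (aone R 4) w1 c (amul w1 c) in
  [/\ B *m B^T = 1%:M, C *m C^T = 1%:M & J1 *m (B^T *m C) = (B^T *m C) *m Lm w1].
Proof.
move=> hs hq hy hu huy huyJ hw0 hc0 hw hc hwc B C.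
have hB : B *m B^T = 1%:M.
  apply: orth4 => //; rewrite ?dotJ //.
  - by rewrite dotC dotJv.
  - by rewrite dotC.
  - by rewrite dotC dotJl // huyJ oppr0.
  - by rewrite dotC.
  - by rewrite dotC.
  - by rewrite dotC dotJv.
have hC : C *m C^T = 1%:M.
  apply: orth4 => //; rewrite ?dot_aone ?q_norm ?hw ?hc ?mulr1 //.
  - by rewrite dotC q_dot1.
  - by rewrite dotC q_dot1.
  - by rewrite dotC q_dot_1 hw0 hc0 hwc !mulr0 subr0.
  - by rewrite dotC q_dot_l hw hc0 mulr0.
  - by rewrite dotC q_dot_r hc hw0 mulr0.
split => //; apply: (conj_rel (S := S1)) => //.
- by rewrite /S1 /B; r4; rewrite // -mulmxA hq mulmxN mulmx1.
- rewrite /S1 /C; r4; rewrite -!amulE ?q_one_r //.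
  + by rewrite imag_sq.
  + by rewrite q_assoc imag_sq // amulNl q_one_l.
Qed.

Lemma quad2 (J1 J2 : 'M[R]_4) (y w1 w2 : 'rV[R]_4) :
  J1^T = - J1 -> J1 *m J1 = - 1%:M -> J2^T = - J2 -> J2 *m J2 = - 1%:M ->
  J1 *m J2 = - (J2 *m J1) -> dot y y = 1 ->
  w1 0 o0 = 0 -> w2 0 o0 = 0 -> dot w1 w1 = 1 -> dot w2 w2 = 1 -> dot w1 w2 = 0 ->
  let B := mx4 y (y *m J1) (y *m J2) (y *m J2 *m J1) in
  let C := mx4 (aone R 4) w1 w2 (amul w1 w2) in
  [/\ B *m B^T = 1%:M, C *m C^T = 1%:M, J1 *m (B^T *m C) = (B^T *m C) *m Lm w1
    & J2 *m (B^T *m C) = (B^T *m C) *m Lm w2].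
Proof.
move=> hs1 hq1 hs2 hq2 hac hy hw1 hw2 h1 h2 h12 B C.
have hac' : J2 *m J1 = - (J1 *m J2) by rewrite hac opprK.
have [hB hC hr1] := quad1 hs1 hq1 hy (etrans (dotJ _ _ hs2 hq2) hy) (dotJv _ hs2) (dotJJ _ hs2 hs1 hac')
  hw1 hw2 h1 h2 h12.
split => //; apply: (conj_rel (S := S2)) => //.
- rewrite /S2 /B; r4; rewrite // ?mulmxA.
  + by rewrite -(mulmxA y J1 J2) hac mulmxN mulmxA.
  + by rewrite -mulmxA hq2 mulmxN mulmx1.
  + by rewrite -!mulmxA hac mulmxN (mulmxA J2 J2 J1) hq2 mulNmx mul1mx opprK.
- rewrite /S2 /C; r4; rewrite -!amulE ?q_one_r //.
  + by rewrite imag_ac.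
  + by rewrite imag_sq.
  + by rewrite q_assoc (imag_ac hw1 hw2 h12) amulNl -q_assoc imag_sq // amulNr opprK q_one_r.
Qed.

Lemma expand4 (B : 'M[R]_4) (v : 'rV[R]_4) : B *m B^T = 1%:M ->
  v = \sum_(i < 4) dot v (row i B) *: row i B.
Proof.
move=> hB; rewrite -{1}[v]mulmx1 -(orthT hB) mulmxA mulmx_sum_row.
apply: eq_bigr => i _; congr (_ *: _).
by rewrite /dot !mxE; apply: eq_bigr => l _; rewrite !mxE.
Qed.

Lemma LmM (a b : 'rV[R]_4) : Lm b *m Lm a = Lm (amul a b).
Proof. by apply: mxext => v; rewrite mulmxA -!amulE q_assoc. Qed.

Lemma LmZ k c (a : 'rV[R]_k) : Lm (c *: a) = c *: Lm a.
Proof. apply/matrixP => l i; rewrite !mxE mulr_sumr; apply: eq_bigr => j _; rewrite !mxE; ring. Qed.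

Lemma J3_lemma (J1 J2 J3 : 'M[R]_4) (y : 'rV[R]_4) :
  J1^T = - J1 -> J1 *m J1 = - 1%:M -> J2^T = - J2 -> J2 *m J2 = - 1%:M ->
  J3^T = - J3 -> J3 *m J3 = - 1%:M ->
  J1 *m J2 = - (J2 *m J1) -> J1 *m J3 = - (J3 *m J1) -> J2 *m J3 = - (J3 *m J2) ->
  mx4 y (y *m J1) (y *m J2) (y *m J2 *m J1) *m (mx4 y (y *m J1) (y *m J2) (y *m J2 *m J1))^T = 1%:M ->
  exists d : R, d * d = 1 /\ J3 = d *: (J2 *m J1).
Proof.
move=> hs1 hq1 hs2 hq2 hs3 hq3 h12 h13 h23 hB.
set B := mx4 _ _ _ _ in hB.
set d := dot (y *m J3) (y *m J2 *m J1).
have hv : y *m J3 = d *: (y *m J2 *m J1).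
  rewrite {1}(expand4 (y *m J3) hB) !big_ord_recl big_ord0 !row_mx4 /=.
  rewrite dotJv // !dotJJ // ?addr0; first by rewrite !scale0r !add0r.
  - by rewrite h23 opprK.
  - by rewrite h13 opprK.
have eB := rows_orth hB.
have hyy : dot y y = 1 by have := eB 0 0; rewrite !row_mx4.
exists d; split.
  have := dotJ y y hs3 hq3; rewrite hv dotZl dotZr !dotJ // hyy.
  by rewrite mulr1 mulrC.
set M := J3 - d *: (J2 *m J1).
have hM1 : J1 *m M = - (M *m J1).
  rewrite /M mulmxBr mulmxBl -scalemxAr -scalemxAl h13 (mulmxA J1 J2 J1) h12 mulNmx.
  by rewrite scalerN opprK opprB addrC.
have hM2 : J2 *m M = - (M *m J2).
  rewrite /M mulmxBr mulmxBl -scalemxAr -scalemxAl h23 (mulmxA J2 J2 J1) hq2 mulNmx mul1mx.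
  rewrite -(mulmxA J2 J1 J2) h12 mulmxN (mulmxA J2 J2 J1) hq2 mulNmx mul1mx opprK.
  by rewrite scalerN opprK opprB addrC.
have hy0 : y *m M = 0.
  by rewrite /M mulmxBr -scalemxAr mulmxA -hv subrr.
have hBM : B *m M = 0.
  apply/row_matrixP => i; rewrite row_mul row0 row_mx4.
  case: i => [[|[|[|[|i]]]] hi] //=.
  - by rewrite -mulmxA hM1 mulmxN mulmxA hy0 mul0mx oppr0.
  - by rewrite -mulmxA hM2 mulmxN mulmxA hy0 mul0mx oppr0.
  - by rewrite -!mulmxA hM1 mulmxN (mulmxA J2 M J1) hM2 mulNmx !mulmxN !mulmxA hy0 !mul0mx !oppr0.
have hM0 : M = 0 by rewrite -[M]mul1mx -(orthT hB) -mulmxA hBM mulmx0.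
by apply/eqP; rewrite -subr_eq0 -/M hM0.
Qed.
End K4.

Section Cores.
Variable R : rcfType.

Lemma rank_aone : \rank (aone R 4) = 1%N.
Proof. by apply: rank_orth; apply: dot1; apply: dot_aone. Qed.

Lemma imag_of (w : 'rV[R]_4) : w *m (aone R 4)^T = 0 -> w 0 o0 = 0.
Proof. by move=> h; apply: dot_imag; rewrite -[aone R 4]row0_1; apply: ortho_rows. Qed.

Lemma PY_orth (B C : 'M[R]_4) : B *m B^T = 1%:M -> C *m C^T = 1%:M ->
  (B^T *m C) *m (B^T *m C)^T = 1%:M.
Proof.
move=> hB hC; rewrite trmx_mul trmxK mulmxA -(mulmxA _ C) hC mulmx1; exact: orthT.
Qed.

Lemma PY_one (B C : 'M[R]_4) y : B *m B^T = 1%:M -> row 0 B = y -> row 0 C = aone R 4 ->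
  y *m (B^T *m C) = aone R 4.
Proof. by move=> hB h0 h1; rewrite mulmxA -h0 row_orth_delta // delta_mul. Qed.

Definition q1 : 'I_3 := @Ordinal 3 1 isT.
Definition q2 : 'I_3 := @Ordinal 3 2 isT.

Lemma core43 (mu : 'rV[R]_3 -> 'rV[R]_4 -> 'rV[R]_4) W eX eY :
  isometric_bilinear mu -> (3 <= \rank W)%N -> (aone R 4 <= W)%MS ->
  dot eX eX = 1 -> dot eY eY = 1 -> goodB mu W eX eY.
Proof.
move=> hmu hW h1W heX heY.
have [F [hF hF0]] := basis_with heX.
have eF : forall i j, dot (row i F) (row j F) = (i == j)%:R by move=> i j; apply: rowsF.
set f1 := row q1 F; set f2 := row q2 F.
have h1X : dot f1 eX = 0 by rewrite -hF0 eF.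
have h2X : dot f2 eX = 0 by rewrite -hF0 eF.
have h11 : dot f1 f1 = 1 by rewrite eF eqxx.
have h22 : dot f2 f2 = 1 by rewrite eF eqxx.
have h12 : dot f1 f2 = 0 by rewrite eF.
have [w1 [hw1W hw1a hw1]] := @ortho_ext R 4 1 4 W (aone R 4) ltac:(rewrite rank_aone; lia).
have hw10 := imag_of hw1a.
have ha1 : dot (aone R 4) w1 = 0 by rewrite dotC q_dot1.
have hA2 : mx2 (aone R 4) w1 *m (mx2 (aone R 4) w1)^T = 1%:M by apply: orth2; rewrite ?dot_aone.
have [w2 [hw2W hw2V hw2]] := @ortho_ext R 4 2 4 W (mx2 (aone R 4) w1) ltac:(rewrite (rank_orth hA2); lia).
have := ortho_rows hw2V; move=> e2.
have hw20 : w2 0 o0 = 0 by apply: dot_imag; have := e2 0; rewrite row_mx2.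
have h12w : dot w1 w2 = 0 by rewrite dotC; have := e2 1; rewrite row_mx2.
have ha2 : dot (aone R 4) w2 = 0 by rewrite dotC q_dot1.
have [hB hC hr1 hr2] := quad2 (JJ_skew hmu h1X) (JJ_sq hmu heX h1X h11)
  (JJ_skew hmu h2X) (JJ_sq hmu heX h2X h22) (JJ_ac hmu heX h1X h2X h12) heY
  hw10 hw20 hw1 hw2 h12w.
move: hB hC hr1 hr2.
set B := mx4 eY _ _ _; set C := mx4 (aone R 4) _ _ _ => hB hC hr1 hr2.
apply: (@assemble R 4 3 mu W eX eY F (mx3 (aone R 4) w1 w2) (B^T *m C) 0) => //.
- by apply: orth3; rewrite ?dot_aone.
- by rewrite row_mx3.
- apply/row_subP => i; rewrite row_mx3; case: i => [[|[|[|i]]] hi] //=.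
- exact: PY_orth.
- by apply: PY_one => //; rewrite row_mx4.
- move=> i; case: i => [[|[|[|i]]] hi] //.
  + have -> : Ordinal hi = 0 by exact/val_inj.
    by rewrite hF0 row_mx3 /= Hrel0.
  + have -> : Ordinal hi = q1 by exact/val_inj.
    by rewrite row_mx3 /=; exact: hr1.
  + have -> : Ordinal hi = q2 by exact/val_inj.
    by rewrite row_mx3 /=; exact: hr2.
Qed.

Lemma core42 (mu : 'rV[R]_2 -> 'rV[R]_4 -> 'rV[R]_4) W eX eY :
  isometric_bilinear mu -> (2 <= \rank W)%N -> (aone R 4 <= W)%MS ->
  dot eX eX = 1 -> dot eY eY = 1 -> goodB mu W eX eY.
Proof.
move=> hmu hW h1W heX heY.
have [F [hF hF0]] := basis_with heX.
have eF : forall i j, dot (row i F) (row j F) = (i == j)%:R by move=> i j; apply: rowsF.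
set f1 := row p1 F.
have h1X : dot f1 eX = 0 by rewrite -hF0 eF.
have h11 : dot f1 f1 = 1 by rewrite eF eqxx.
have hs := JJ_skew hmu h1X; have hq := JJ_sq hmu heX h1X h11.
set J1 := JJ mu eX f1 in hs hq.
have [w1 [hw1W hw1a hw1]] := @ortho_ext R 4 1 4 W (aone R 4) ltac:(rewrite rank_aone; lia).
have hw10 := imag_of hw1a.
have ha1 : dot (aone R 4) w1 = 0 by rewrite dotC q_dot1.
have hA2 : mx2 (aone R 4) w1 *m (mx2 (aone R 4) w1)^T = 1%:M by apply: orth2; rewrite ?dot_aone.
have [c [_ hcV hc]] := @ortho_ext R 4 2 4 1%:M (mx2 (aone R 4) w1) ltac:(rewrite (rank_orth hA2) mxrank1; lia).
have := ortho_rows hcV; move=> e2.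
have hc0 : c 0 o0 = 0 by apply: dot_imag; have := e2 0; rewrite row_mx2.
have hwc : dot w1 c = 0 by rewrite dotC; have := e2 1; rewrite row_mx2.
have hY2 : mx2 eY (eY *m J1) *m (mx2 eY (eY *m J1))^T = 1%:M.
  by apply: orth2; rewrite ?dotJ // dotC dotJv.
have [u [_ huV hu]] := @ortho_ext R 4 2 4 1%:M (mx2 eY (eY *m J1)) ltac:(rewrite (rank_orth hY2) mxrank1; lia).
have := ortho_rows huV; move=> e3.
have huy : dot u eY = 0 by have := e3 0; rewrite row_mx2.
have huyJ : dot u (eY *m J1) = 0 by have := e3 1; rewrite row_mx2.
have [hB hC hr1] := quad1 hs hq heY hu huy huyJ hw10 hc0 hw1 hc hwc.
move: hB hC hr1.
set B := mx4 eY _ _ _; set C := mx4 (aone R 4) _ _ _ => hB hC hr1.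
apply: (@assemble R 4 2 mu W eX eY F (mx2 (aone R 4) w1) (B^T *m C) 0) => //.
- by rewrite row_mx2.
- apply/row_subP => i; rewrite row_mx2; case: i => [[|[|i]] hi] //=.
- exact: PY_orth.
- by apply: PY_one => //; rewrite row_mx4.
- move=> i; case: i => [[|[|i]] hi] //.
  + have -> : Ordinal hi = 0 by exact/val_inj.
    by rewrite hF0 row_mx2 /= Hrel0.
  + have -> : Ordinal hi = p1 by exact/val_inj.
    by rewrite row_mx2 /=; exact: hr1.
Qed.

Lemma core44 (mu : 'rV[R]_4 -> 'rV[R]_4 -> 'rV[R]_4) W eX eY :
  isometric_bilinear mu -> (4 <= \rank W)%N ->
  dot eX eX = 1 -> dot eY eY = 1 -> goodB mu W eX eY.
Proof.
move=> hmu hW heX heY.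
have h1W : (aone R 4 <= W)%MS by apply: full_sub.
have [F [hF hF0]] := basis_with heX.
have eF : forall i j, dot (row i F) (row j F) = (i == j)%:R by move=> i j; apply: rowsF.
set f1 := row o1 F; set f2 := row o2 F; set f3 := row o3 F.
have h1X : dot f1 eX = 0 by rewrite -hF0 eF.
have h2X : dot f2 eX = 0 by rewrite -hF0 eF.
have h3X : dot f3 eX = 0 by rewrite -hF0 eF.
have h11 : dot f1 f1 = 1 by rewrite eF eqxx.
have h22 : dot f2 f2 = 1 by rewrite eF eqxx.
have h33 : dot f3 f3 = 1 by rewrite eF eqxx.
have h12 : dot f1 f2 = 0 by rewrite eF.
have h13 : dot f1 f3 = 0 by rewrite eF.
have h23 : dot f2 f3 = 0 by rewrite eF.
have [w1 [hw1W hw1a hw1]] := @ortho_ext R 4 1 4 W (aone R 4) ltac:(rewrite rank_aone; lia).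
have hw10 := imag_of hw1a.
have ha1 : dot (aone R 4) w1 = 0 by rewrite dotC q_dot1.
have hA2 : mx2 (aone R 4) w1 *m (mx2 (aone R 4) w1)^T = 1%:M by apply: orth2; rewrite ?dot_aone.
have [w2 [hw2W hw2V hw2]] := @ortho_ext R 4 2 4 W (mx2 (aone R 4) w1) ltac:(rewrite (rank_orth hA2); lia).
have := ortho_rows hw2V; move=> e2.
have hw20 : w2 0 o0 = 0 by apply: dot_imag; have := e2 0; rewrite row_mx2.
have h12w : dot w1 w2 = 0 by rewrite dotC; have := e2 1; rewrite row_mx2.
have [hB hC hr1 hr2] := quad2 (JJ_skew hmu h1X) (JJ_sq hmu heX h1X h11)
  (JJ_skew hmu h2X) (JJ_sq hmu heX h2X h22) (JJ_ac hmu heX h1X h2X h12) heY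
  hw10 hw20 hw1 hw2 h12w.
have [d [hd hJ3]] := J3_lemma (JJ_skew hmu h1X) (JJ_sq hmu heX h1X h11)
  (JJ_skew hmu h2X) (JJ_sq hmu heX h2X h22) (JJ_skew hmu h3X) (JJ_sq hmu heX h3X h33)
  (JJ_ac hmu heX h1X h2X h12) (JJ_ac hmu heX h1X h3X h13) (JJ_ac hmu heX h2X h3X h23) hB.
move: hB hC hr1 hr2 hJ3.
set B := mx4 eY _ _ _; set C := mx4 (aone R 4) _ _ _ => hB hC hr1 hr2 hJ3.
have eC := rows_orth hC.
set a := amul w1 w2.
have haa : dot a a = 1 by have := eC o3 o3; rewrite !row_mx4.
have h1a : dot (aone R 4) a = 0 by have := eC o0 o3; rewrite !row_mx4.
have hw1a' : dot w1 a = 0 by have := eC o1 o3; rewrite !row_mx4.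
have hw2a : dot w2 a = 0 by have := eC o2 o3; rewrite !row_mx4.
have ha2 : dot (aone R 4) w2 = 0 by rewrite dotC q_dot1.
apply: (@assemble R 4 4 mu W eX eY F (mx4 (aone R 4) w1 w2 (d *: a)) (B^T *m C) 0) => //.
- apply: orth4; rewrite ?dot_aone ?dotZl ?dotZr ?haa ?h1a ?hw1a' ?hw2a ?mulr0 ?mulr1 //.
- by rewrite row_mx4.
- exact: full_sub.
- exact: PY_orth.
- by apply: PY_one => //; rewrite row_mx4.
- move=> i; case: i => [[|[|[|[|i]]]] hi] //.
  + have -> : Ordinal hi = 0 by exact/val_inj.
    by rewrite hF0 row_mx4 /= Hrel0.
  + have -> : Ordinal hi = o1 by exact/val_inj.
    by rewrite row_mx4 /=; exact: hr1.
  + have -> : Ordinal hi = o2 by exact/val_inj.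
    by rewrite row_mx4 /=; exact: hr2.
  + have -> : Ordinal hi = o3 by exact/val_inj.
    rewrite row_mx4 /=; change (JJ mu eX f3 *m (B^T *m C) = (B^T *m C) *m Lm (d *: a)).
    rewrite hJ3 LmZ -scalemxAr -scalemxAl -mulmxA hr1 mulmxA hr2 -mulmxA LmM.
    by rewrite scalemxAr.
Qed.
End Cores.

Section Final.
Variable R : rcfType.

Lemma coreB k m (mu : 'rV[R]_m -> 'rV[R]_k -> 'rV[R]_k) W eX eY :
  k \in [:: 1%N; 2%N; 4%N] -> (0 < m)%N -> (m <= k)%N ->
  isometric_bilinear mu -> (m <= \rank W)%N -> (aone R k <= W)%MS ->
  dot eX eX = 1 -> dot eY eY = 1 -> goodB mu W eX eY.
Proof.
rewrite !inE => hk hm0 hmk hmu hW h1 hX hY.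
have [e|[e|e]] : k = 1%N \/ k = 2%N \/ k = 4%N.
- by case/orP: hk => [/eqP ->|/orP [/eqP ->|/eqP ->]]; auto.
- subst k; have e : m = 1%N by lia.
  subst m; exact: core_m1.
- subst k; have [e|e] : m = 1%N \/ m = 2%N by lia.
  + subst m; exact: core_m1.
  + subst m; exact: core22.
- subst k; have [e|[e|[e|e]]] : m = 1%N \/ m = 2%N \/ m = 3%N \/ m = 4%N by lia.
  + subst m; exact: core_m1.
  + subst m; exact: core42.
  + subst m; exact: core43.
  + subst m; exact: core44.
Qed.

Lemma unit_ex n : (0 < n)%N -> exists e : 'rV[R]_n, dot e e = 1.
Proof. by case: n => [|n] // _; exists (aone R n.+1); exact: dot_aone. Qed.

Lemma dot_of_vnorm n (e : 'rV[R]_n) : vnorm e = 1 -> dot e e = 1.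
Proof. by rewrite vnormE => h; rewrite -(sqr_sqrtr (dot_ge0 e)) h expr1n. Qed.

Lemma goodA_of k m (mu : 'rV[R]_m -> 'rV[R]_k -> 'rV[R]_k) W eX eY :
  goodB mu W eX eY -> goodA mu W.
Proof. by case=> PX [PY [PZ [h _]]]; exists PX, PY, PZ. Qed.

Lemma partA k m (mu : 'rV[R]_m -> 'rV[R]_k -> 'rV[R]_k) W :
  k \in [:: 1%N; 2%N; 4%N] -> (0 < m)%N -> (m <= k)%N ->
  isometric_bilinear mu -> \rank W = m -> goodA mu W.
Proof.
move=> hk hm0 hmk hmu hW.
have [eX heX] := unit_ex hm0.
have [eY heY] := unit_ex (leq_trans hm0 hmk).
have hcore : forall W' : 'M[R]_k, (\rank W <= \rank W')%N -> (aone R k <= W')%MS -> goodA mu W'.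
  move=> W' h1 h2; apply: (goodA_of (eX := eX) (eY := eY)).
  by apply: coreB => //; rewrite -hW.
have hr : (0 < \rank W)%N by rewrite hW.
move: hk; rewrite !inE => hk.
have [e|[e|e]] : k = 1%N \/ k = 2%N \/ k = 4%N.
- by case/orP: hk => [/eqP ->|/orP [/eqP ->|/eqP ->]]; auto.
- subst k; apply: trick => //; [exact: r_assoc | exact: r_norm | exact: r_conj_r | exact: r_conj_l | exact: r_one_l].
- subst k; apply: trick => //; [exact: c_assoc | exact: c_norm | exact: c_conj_r | exact: c_conj_l | exact: c_one_l].
- subst k; apply: trick => //; [exact: q_assoc | exact: q_norm | exact: q_conj_r | exact: q_conj_l | exact: q_one_l].
Qed.

Lemma mainTheorem11_aux (k m : nat)
  (mu : 'rV[R]_m -> 'rV[R]_k -> 'rV[R]_k) (W : 'M[R]_k) :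
  k \in [:: 1%N; 2%N; 4%N] ->
  (0 < m)%N -> (m <= k)%N ->
  isometric_bilinear mu ->
  \rank W = m ->
  (exists (PX : 'M[R]_(m, k)) (PY PZ : 'M[R]_k),
      [/\ lin_isometry PX, lin_isometry PY, lin_isometry PZ,
          (forall x : 'rV[R]_m, (x *m PX <= W)%MS) &
          (forall x y, mu x y *m PZ = amul (x *m PX) (y *m PY))])
  /\
  ((aone R k <= W)%MS ->
   forall (eX : 'rV[R]_m) (eY : 'rV[R]_k), vnorm eX = 1 -> vnorm eY = 1 ->
   exists (PX : 'M[R]_(m, k)) (PY PZ : 'M[R]_k),
      [/\ lin_isometry PX, lin_isometry PY, lin_isometry PZ,
          (forall x : 'rV[R]_m, (x *m PX <= W)%MS) &
          (forall x y, mu x y *m PZ = amul (x *m PX) (y *m PY))]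
      /\ eX *m PX = aone R k /\ eY *m PY = aone R k).
Proof.
move=> hk hm0 hmk hmu hW; split; first exact: partA.
move=> h1 eX eY hX hY.
apply: coreB => //; first by rewrite hW.
- exact: dot_of_vnorm.
- exact: dot_of_vnorm.
Qed.
End Final.

End Aux.

Theorem mainTheorem11 (R : rcfType) (k m : nat)
  (mu : 'rV[R]_m -> 'rV[R]_k -> 'rV[R]_k) (W : 'M[R]_k) :
  k \in [:: 1%N; 2%N; 4%N] ->
  (0 < m)%N -> (m <= k)%N ->
  isometric_bilinear mu ->
  \rank W = m ->
  (exists (PX : 'M[R]_(m, k)) (PY PZ : 'M[R]_k),
      [/\ lin_isometry PX, lin_isometry PY, lin_isometry PZ,
          (forall x : 'rV[R]_m, (x *m PX <= W)%MS) &
          (forall x y, mu x y *m PZ = amul (x *m PX) (y *m PY))])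
  /\
  ((aone R k <= W)%MS ->
   forall (eX : 'rV[R]_m) (eY : 'rV[R]_k), vnorm eX = 1 -> vnorm eY = 1 ->
   exists (PX : 'M[R]_(m, k)) (PY PZ : 'M[R]_k),
      [/\ lin_isometry PX, lin_isometry PY, lin_isometry PZ,
          (forall x : 'rV[R]_m, (x *m PX <= W)%MS) &
          (forall x y, mu x y *m PZ = amul (x *m PX) (y *m PY))]
      /\ eX *m PX = aone R k /\ eY *m PY = aone R k).
Proof. exact: Aux.mainTheorem11_aux. Qed.
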